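(* Let $R$ be a GSWNC ring and let $e \in R$ be a non-zero idempotent. Then the corner ring $eRe$ is a GSWNC ring.
   Context: All rings are associative with identity; $eRe$ has identity $e$. An element $a$ of a ring is strongly weakly nil-clean if there exist an idempotent $f$ and a nilpotent $q$ with $fq = qf$ such that $a = q + f$ or $a = q - f$. A ring is GSWNC if every non-invertible element is strongly weakly nil-clean. *)

(* Defs.v *)
From mathcomp Require Import all_boot all_order all_algebra.
Set Implicit Arguments. Unset Strict Implicit. Unset Printing Implicit Defensive.
Import GRing.Theory.
Local Open Scope ring_scope.

Section Defs.
Variable R : nzRingType.

Definition is_idem (f : R) : Prop := f * f = f.
Definition is_nilp (q : R) : Prop := exists n : nat, q ^+ n = 0.

Definition swnc (a : R) : Prop :=
  exists f q : R, is_idem f /\ is_nilp q /\ f * q = q * f /\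
                  (a = q + f \/ a = q - f).

Definition invertible (a : R) : Prop := exists b : R, a * b = 1 /\ b * a = 1.

Definition GSWNC : Prop := forall a : R, ~ invertible a -> swnc a.

Definition in_corner (e x : R) : Prop := x = e * x * e.

Definition corner_invertible (e a : R) : Prop :=
  exists b : R, in_corner e b /\ a * b = e /\ b * a = e.

(* a strongly weakly nil-clean in eRe: is_idem and is_nilp taken in eRe
   (ring operations of eRe are those of R; positive powers agree) *)
Definition corner_swnc (e a : R) : Prop :=
  exists f q : R, in_corner e f /\ in_corner e q /\
    is_idem f /\ is_nilp q /\ f * q = q * f /\
    (a = q + f \/ a = q - f).

Definition corner_GSWNC (e : R) : Prop :=
  forall a : R, in_corner e a -> ~ corner_invertible e a -> corner_swnc e a.
End Defs.

(* Main.v *)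
Require Import Defs.
From mathcomp Require Import all_boot all_order all_algebra.
From mathcomp Require Import ring.
Set Implicit Arguments. Unset Strict Implicit. Unset Printing Implicit Defensive.
Import GRing.Theory.
Local Open Scope ring_scope.

Section Poly.
Definition TT : {poly int} := 'X - 'X ^+ 2.
Fixpoint PP (k : nat) : {poly int} :=
  match k with 0 => 'X | k.+1 => 3 * PP k ^+ 2 - 2 * PP k ^+ 3 end.

Lemma PP_prop k : exists A B : {poly int},
  PP k - PP k ^+ 2 = TT ^+ k.+1 * A /\ 'X - PP k = TT * B.
Proof.
elim: k => [|k [A [B [hA hB]]]].
  exists 1, 0; rewrite /= /TT; split; ring.
exists (TT ^+ k * A ^+ 2 * ((3 - 2 * PP k) * (1 + 2 * PP k))).
exists (B + TT ^+ k * A * (1 - 2 * PP k)).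
rewrite /=; split.
  have -> : 3 * PP k ^+ 2 - 2 * PP k ^+ 3 - (3 * PP k ^+ 2 - 2 * PP k ^+ 3) ^+ 2
     = (PP k - PP k ^+ 2) ^+ 2 * ((3 - 2 * PP k) * (1 + 2 * PP k)) by ring.
  rewrite hA !exprS; ring.
have -> : 'X - (3 * PP k ^+ 2 - 2 * PP k ^+ 3)
   = ('X - PP k) + (PP k - PP k ^+ 2) * (1 - 2 * PP k) by ring.
rewrite hA hB exprS; ring.
Qed.
End Poly.

Section Main.
Variable R : nzRingType.

Lemma lift (y : R) n : (y - y ^+ 2) ^+ n = 0 ->
  exists F : R, F * F = F /\ (exists m, (y - F) ^+ m = 0) /\
    forall z : R, z * y = y * z -> z * F = F * z.
Proof.
move=> hn.
have cfu : commr_rmorph (intr : int -> R) y by move=> i; exact: commr_int.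
pose h := horner_morph cfu.
have hcomm : forall z p, z * y = y * z -> z * h p = h p * z.
  move=> z p hz; rewrite /h /horner_morph.
  apply: commr_horner => // i; rewrite coef_map /=; exact: commr_sym (commr_int _ _).
have hX : h 'X = y by rewrite /h horner_morphX.
have hT : h TT = y - y ^+ 2 by rewrite /TT -hX /h rmorphB rmorphXn.
have [A [B [hA hB]]] := PP_prop n.
exists (h (PP n)); split; [|split].
- have e1 : h (TT ^+ n.+1 * A) = 0.
    by rewrite /h rmorphM /= rmorphXn /= -/h hT exprSr hn mul0r mul0r.
  have : h (PP n - PP n ^+ 2) = 0 by rewrite hA.
  rewrite /h rmorphB /= rmorphXn /= -/h => /eqP; rewrite subr_eq0 expr2 => /eqP hP.
  by rewrite {3}hP.
- exists n.
  have : h ('X - PP n) = h (TT * B) by rewrite hB.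
  rewrite /h rmorphB rmorphM /= -/h hX hT => ->.
  rewrite exprMn_comm ?hn ?mul0r //.
  rewrite /GRing.comm -hT /h -!rmorphM /=; by rewrite mulrC.
- move=> z hz; exact: hcomm.
Qed.

Lemma pre (y q f : R) : f * f = f -> (exists n, q ^+ n = 0) -> f * q = q * f ->
  y = q + f -> exists n, (y - y ^+ 2) ^+ n = 0.
Proof.
move=> hf [n hn] hfq ->; exists n.
have -> : q + f - (q + f) ^+ 2 = q * (1 - q - 2%:R * f).
  rewrite expr2 mulrDl !mulrDr hf mulr1 !mulrN mulr_natl mulrnAr -hfq mulr2n.
  set a := q * q; set b := f * q.
  by rewrite !opprD !addrA; do 3!rewrite (addrAC _ f); rewrite addrK.
rewrite exprMn_comm ?hn ?mul0r //.
rewrite /GRing.comm mulrBr mulrBr mulrBl mulrBl mulr1 mul1r; congr (_ - _).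
by rewrite -mulrA hfq !mulrA (commr_nat q 2).
Qed.

Lemma comm3 (e u v : R) : e * u = u * e -> e * v = v * e -> u * v = v * u ->
  (e * u) * (e * v) = (e * v) * (e * u).
Proof.
move=> hu hv huv.
have key : forall w z, e * w = w * e -> e * w * (e * z) = e * e * (w * z).
  by move=> w z hw; rewrite mulrA -(mulrA e w e) -hw !mulrA.
by rewrite key // key // huv.
Qed.

Lemma cornerl (e y : R) : e * e = e -> e * y = y * e ->
  (exists n, (y - y ^+ 2) ^+ n = 0) ->
  exists f q : R, in_corner e f /\ in_corner e q /\
    is_idem f /\ is_nilp q /\ f * q = q * f /\ e * y = q + f.
Proof.
move=> he hey [n hn].
have [F [hFF [[m hm] hcF]]] := lift hn.
have heF : e * F = F * e by apply: hcF.
have hyF : y * F = F * y by apply: hcF.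
have heyF : e * (y - F) = (y - F) * e by rewrite mulrBr mulrBl hey heF.
have hFyF : F * (y - F) = (y - F) * F by rewrite mulrBr mulrBl hyF.
have cor : forall u, e * u = u * e -> in_corner e (e * u).
  by move=> u hu; rewrite /in_corner mulrA he -mulrA -hu mulrA he.
exists (e * F), (e * (y - F)); split; [|split; [|split; [|split; [|split]]]].
- exact: cor.
- exact: cor.
- by rewrite /is_idem mulrA -(mulrA e F e) -heF mulrA he -mulrA hFF.
- exists m; rewrite exprMn_comm ?hm ?mulr0 //.
- exact: comm3.
- by rewrite -mulrDr subrK.
Qed.

End Main.

Theorem lemma2p14 (R : nzRingType) (e : R) :
  GSWNC R -> is_idem e -> e != 0 -> corner_GSWNC e.
Proof.
move=> hG he _ a ha hni.
have ea : e * a = a by rewrite ha !mulrA he.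
have ae : a * e = a by rewrite ha -!mulrA he.
set x := a + (1 - e).
have ex : e * x = a by rewrite /x mulrDr mulrBr mulr1 he subrr addr0.
have xe : x * e = a by rewrite /x mulrDl mulrBl mul1r he subrr addr0.
have hex : e * x = x * e by rewrite ex xe.
have nix : ~ invertible x.
  move=> [b [h1 h2]]; apply: hni; exists (e * b * e); split; [|split].
  - by rewrite /in_corner !mulrA he -!mulrA he.
  - by rewrite !mulrA ae -ex -(mulrA e x b) h1 mulr1 he.
  - by rewrite -mulrA ea -xe mulrA -(mulrA e b x) h2 mulr1 he.
have [f [q [hf [hq [hfq hx]]]]] := hG x nix.
case: hx => hx.
- have hn := pre hf hq hfq hx.
  have [f' [q' [c1 [c2 [c3 [c4 [c5 c6]]]]]]] := cornerl he hex hn.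
  by exists f', q'; do 5!split => //; left; rewrite -c6 ex.
- have hq' : is_nilp (- q).
    by case: hq => n hn; exists n; rewrite exprNn hn mulr0.
  have hfq' : f * (- q) = (- q) * f by rewrite mulrN mulNr hfq.
  have hx' : - x = - q + f by rewrite hx opprB addrC.
  have hn := pre hf hq' hfq' hx'.
  have hex' : e * (- x) = (- x) * e by rewrite mulrN mulNr hex.
  have [f' [q' [c1 [c2 [c3 [c4 [c5 c6]]]]]]] := cornerl he hex' hn.
  exists f', (- q'); split; [done|split; [|split; [done|split; [|split]]]].
  + by rewrite /in_corner mulrN mulNr -c2.
  + by case: c4 => n hn'; exists n; rewrite exprNn hn' mulr0.
  + by rewrite mulrN mulNr c5.
  + right; apply: oppr_inj; by rewrite opprB addrC opprK -c6 mulrN ex.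
Qed.
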